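(* Let $(V,E,W)$ and $(\tilde V,\tilde E,\tilde W)$ be finite connected weighted graphs with shortest-path metrics $d_E$ and $d_{\tilde E}$, let $f:V\to\tilde V$ be any map, and let $\mathcal{F}$ be a universal approximator. Fix enumerations of $V$ and $\tilde V$. For every $\epsilon>0$ there is $\hat f\in\bigcup_{c\in\mathbb{N}_+}\mathcal{F}_{\#V,\#\tilde V,c}$ such that the map $\hat T:V\to\mathcal{P}(\tilde V)$, $$\hat T(x)=\sum_{u\in\tilde V}\Big[P_{\Delta_{\#\tilde V}}\circ\hat f\big((d_E(x,v))_{v\in V}\big)\Big]_u\,\delta_u,$$ satisfies $\max_{x\in V}W_1\big(\hat T(x),\delta_{f(x)}\big)<\epsilon$, where $W_1$ is the 1-Wasserstein distance on probability measures on $(\tilde V,d_{\tilde E})$.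
   Context: A weighted graph $(V,E,W)$ has edge weights $W:E\to(0,\infty)$; it is connected if any two vertices are joined by a path, and $d_E(u,v)$ is the minimum over paths $u=v_1,\dots,v_T=v$ of $\sum_tW(\{v_t,v_{t+1}\})$. $\Delta_k$ is the standard simplex in $\mathbb{R}^k$ and $P_{\Delta_k}$ the Euclidean orthogonal projection onto it. A universal approximator is a family $\mathcal{F}=\{\mathcal{F}_{n,m,c}\}$, with $\mathcal{F}_{n,m,c}$ nested in $c$ sets of maps $\mathbb{R}^n\to\mathbb{R}^m$, together with a rate function $r(\omega,K,n,m,c)$ decreasing to $0$ in $c$, such that for every uniformly continuous $f:\mathbb{R}^n\to\mathbb{R}^m$ with continuous modulus $\omega$ and every compact $K$, some $\hat f\in\mathcal{F}_{n,m,c}$ satisfies $\sup_K\|f-\hat f\|\le r(\omega,K,n,m,c)$. *)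

(* Defs.v *)
From HB Require Import structures.
From mathcomp Require Import all_boot all_order all_algebra.
From mathcomp Require Import all_classical all_reals all_analysis.
Set Implicit Arguments. Unset Strict Implicit. Unset Printing Implicit Defensive.
Import Order.TTheory GRing.Theory Num.Theory.
Import numFieldNormedType.Exports.
Local Open Scope classical_set_scope.
Local Open Scope ring_scope.

Section Defs.
Variable R : realType.

Definition enorm (n : nat) (x : 'rV[R]_n) : R := Num.sqrt (\sum_(i < n) x ord0 i ^+ 2).

Definition weighted_graph (V : finType) (e : rel V) (W : V -> V -> R) : Prop :=
  symmetric e /\ (forall u v, W u v = W v u) /\ (forall u v, e u v -> 0 < W u v).

Definition connected_graph (V : finType) (e : rel V) : Prop :=
  forall u v : V, exists p : seq V, path e u p /\ last u p = v.

Fixpoint walk_len (V : finType) (W : V -> V -> R) (u : V) (p : seq V) : R :=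
  match p with
  | [::] => 0
  | x :: p' => W u x + walk_len W x p'
  end.

(** shortest-path metric d_E (minimum over paths; written as the infimum of the
    set of path lengths, which is attained for finite connected graphs) *)
Definition graph_dist (V : finType) (e : rel V) (W : V -> V -> R) (u v : V) : R :=
  inf [set L : R | exists p : seq V, [/\ path e u p, last u p = v & L = walk_len W u p]].

Definition simplex (k : nat) : set 'rV[R]_k :=
  [set p | (forall i, 0 <= p ord0 i) /\ \sum_(i < k) p ord0 i = 1].

Definition proj_simplex (k : nat) (y : 'rV[R]_k) : 'rV[R]_k :=
  xget 0 [set p | simplex p /\ forall q, simplex q -> enorm (p - y) <= enorm (q - y)].

Definition cont_modulus (n m : nat) (omega : R -> R) (g : 'rV[R]_n -> 'rV[R]_m) : Prop :=
  [/\ omega 0 = 0,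
      (forall t, 0 <= t -> 0 <= omega t),
      {within [set t : R | 0 <= t], continuous omega} &
      (forall x y, enorm (g x - g y) <= omega (enorm (x - y)))].

Definition universal_approximator
  (F : forall n m : nat, nat -> set ('rV[R]_n -> 'rV[R]_m))
  (r : forall n m : nat, (R -> R) -> set 'rV[R]_n -> nat -> R) : Prop :=
  (forall n m c c', (0 < c)%N -> (c <= c')%N -> F n m c `<=` F n m c')
  /\ (forall n m omega K,
        {in [set c : nat | (0 < c)%N] &, forall c c' : nat, (c <= c')%N -> r n m omega K c' <= r n m omega K c}
        /\ (r n m omega K c @[c --> \oo] --> 0))
  /\ (forall n m (g : 'rV[R]_n -> 'rV[R]_m) omega K c,
        cont_modulus omega g -> compact K -> (0 < c)%N ->
        exists2 ghat, F n m c ghat &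
          forall x, K x -> enorm (g x - ghat x) <= r n m omega K c).

(** finite probability measures on a finite set, as mass functions;
    couplings and the 1-Wasserstein distance w.r.t. a metric d *)
Definition coupling (V : finType) (mu nu : V -> R) (pi : V -> V -> R) : Prop :=
  [/\ (forall u v, 0 <= pi u v),
      (forall u, \sum_v pi u v = mu u) &
      (forall v, \sum_u pi u v = nu v)].

Definition W1 (V : finType) (d : V -> V -> R) (mu nu : V -> R) : R :=
  inf [set c : R | exists pi, coupling mu nu pi /\ c = \sum_u \sum_v pi u v * d u v].

Definition dirac_pt (V : finType) (y : V) : V -> R := fun u => if u == y then 1 else 0.

Definition That (V V' : finType) (e : rel V) (W : V -> V -> R)
  (fhat : 'rV[R]_#|V| -> 'rV[R]_#|V'|) (x : V) : V' -> R :=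
  fun u => proj_simplex (fhat (\row_(i < #|V|) graph_dist e W x (enum_val i))) ord0 (enum_rank u).

End Defs.
Arguments dirac_pt {R V}.

(* Main.v *)
Require Import Defs.
From HB Require Import structures.
From mathcomp Require Import all_boot all_order all_algebra.
From mathcomp Require Import all_classical all_reals all_analysis.
From mathcomp Require Import lra ring.
Import Order.TTheory GRing.Theory Num.Theory.
Local Open Scope classical_set_scope.
Local Open Scope ring_scope.

Section G.
Variables (R : realType) (V : finType) (e : rel V) (W : V -> V -> R).
Hypothesis hG : weighted_graph e W.
Hypothesis hc : connected_graph e.

Lemma walk_len_ge0 u p : path e u p -> 0 <= walk_len W u p.
Proof.
elim: p u => [|x p IH] u /=; first by [].
case/andP=> hux hp; have := IH _ hp.
have := hG.2.2 _ _ hux; lra.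
Qed.

Let S u v := [set L : R | exists p : seq V, [/\ path e u p, last u p = v & L = walk_len W u p]].

Lemma S_lb u v : has_lbound (S u v).
Proof. by exists 0 => L [p [hp _ ->]]; apply: walk_len_ge0. Qed.

Lemma S_ne u v : S u v !=set0.
Proof. by have [p [hp hl]] := hc u v; exists (walk_len W u p), p. Qed.

Lemma dist_ge0 u v : 0 <= graph_dist e W u v.
Proof. by apply: lb_le_inf; [apply: S_ne| move=> L [p [hp _ ->]]; apply: walk_len_ge0]. Qed.

Lemma dist_le u v p : path e u p -> last u p = v -> graph_dist e W u v <= walk_len W u p.
Proof. by move=> hp hl; apply: (ge_inf (S_lb u v)); exists p. Qed.

Lemma dist_refl u : graph_dist e W u u = 0.
Proof. by apply/eqP; rewrite eq_le dist_ge0 andbT; exact: (@dist_le u u [::]). Qed.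

Lemma finite_lb (T : eqType) (P : T -> bool) (w : T -> R) (s : seq T) :
  (forall t, P t -> 0 < w t) -> exists2 d, 0 < d & forall t, t \in s -> P t -> d <= w t.
Proof.
move=> hp; elim: s => [|t s [d hd IH]]; first by exists 1.
case Pt: (P t).
- exists (Num.min d (w t)); first by rewrite lt_min hd hp.
  move=> t'; rewrite in_cons => /orP[/eqP -> _|hin ht']; first by rewrite ge_min lexx orbT.
  by rewrite ge_min IH.
- exists d => // t'; rewrite in_cons => /orP[/eqP -> |]; [by rewrite Pt|exact: IH].
Qed.

Lemma dist_sep : exists2 d, 0 < d & forall x y, x != y -> d <= graph_dist e W x y.
Proof.
have [d hd H] := @finite_lb (prod V V) (fun p : V * V => e p.1 p.2) (fun p => W p.1 p.2) (enum [set: V * V])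
   (fun p hp => hG.2.2 _ _ hp).
exists d => // x y hxy; apply: lb_le_inf; first exact: S_ne.
move=> L [[|z p] [hp hl ->]] /=; first by move: hxy; rewrite -hl eqxx.
case/andP: hp => hxz hp.
have := H (x, z); rewrite mem_enum in_setT => /(_ isT hxz) /= h1.
have := @walk_len_ge0 z p hp; lra.
Qed.
End G.

Section Norm.
Variable R : realType.

Lemma coord_le n (v : 'rV[R]_n) i : `|v ord0 i| <= enorm v.
Proof.
rewrite /enorm -sqrtr_sqr; apply: ler_wsqrtr; rewrite (bigD1 i) //= lerDl.
by apply: sumr_ge0 => k _; exact: sqr_ge0.
Qed.

Lemma enorm_le_sum n (v : 'rV[R]_n) : enorm v <= \sum_i `|v ord0 i|.
Proof.
set T := \sum_i _.
have T0 : 0 <= T by apply: sumr_ge0.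
have Ti : forall i, `|v ord0 i| <= T.
  by move=> i; rewrite /T (bigD1 i) //= lerDl; apply: sumr_ge0.
rewrite /enorm -(ger0_norm T0) -sqrtr_sqr; apply: ler_wsqrtr.
rewrite expr2 mulr_suml; apply: ler_sum => i _.
by rewrite -real_normK ?num_real // expr2 ler_wpM2l.
Qed.

Definition pos0 (a : R) : R := if 0 <= a then a else 0.

Lemma pos0_lip (a b : R) : `|pos0 a - pos0 b| <= `|a - b|.
Proof.
rewrite /pos0; case: ifP => ha; case: ifP => hb.
- by [].
- move/negbT: hb; rewrite -ltNge => hb.
  by rewrite subr0 !ger0_norm //; lra.
- move/negbT: ha; rewrite -ltNge => ha.
  by rewrite sub0r normrN ger0_norm // ler0_norm; lra.
- by rewrite subr0 normr0.
Qed.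

Lemma pos0_le0 (a : R) : a <= 0 -> pos0 a = 0.
Proof. by rewrite /pos0 => h; case: ifP => // h'; apply/eqP; rewrite eq_le h h'. Qed.

Lemma sum_dirac (T : finType) (y : T) : \sum_v dirac_pt y v = 1 :> R.
Proof.
rewrite (bigD1 y) //= big1 => [|v hv]; first by rewrite /dirac_pt eqxx addr0.
by rewrite /dirac_pt (negbTE hv).
Qed.

Lemma dirac_ge0 (T : finType) (y v : T) : 0 <= dirac_pt y v :> R.
Proof. by rewrite /dirac_pt; case: ifP. Qed.

Lemma pos0_ge0 a : 0 <= pos0 a.
Proof. by rewrite /pos0; case: ifP. Qed.
End Norm.

Section Cont.
Import numFieldNormedType.Exports.
Lemma omega_cont (R : realType) (C : R) :
  {within [set t : R | 0 <= t], continuous (fun t => C * t)}.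
Proof. by apply: continuous_subspaceT => t; exact: mulrl_continuous. Qed.
Lemma range_compact (R : realType) n (T : finType) (h : T -> 'rV[R]_n) :
  compact [set h x | x in [set: T]].
Proof. by apply: finite_compact; apply: finite_image; exact: finite_finset. Qed.
End Cont.

Theorem mainTheorem11 (R : realType) (V V' : finType)
  (e : rel V) (W : V -> V -> R) (e' : rel V') (W' : V' -> V' -> R)
  (hG : weighted_graph e W) (hG' : weighted_graph e' W')
  (hc : connected_graph e) (hc' : connected_graph e')
  (f : V -> V')
  (F : forall n m : nat, nat -> set ('rV[R]_n -> 'rV[R]_m))
  (r : forall n m : nat, (R -> R) -> set 'rV[R]_n -> nat -> R)
  (hF : universal_approximator F r)
  (eps : R) (heps : 0 < eps) :
  exists c : nat, (0 < c)%N /\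
    exists2 fhat, F #|V| #|V'| c fhat &
      forall x : V, W1 (graph_dist e' W') (That e W fhat x) (dirac_pt (f x)) < eps.
Proof.
have [del hdel hsep] := dist_sep _ _ _ _ hG hc.
set n := #|V|; set m := #|V'|.
pose rowx (x : V) : 'rV[R]_n := \row_(i < n) graph_dist e W x (enum_val i).
pose phi (y : V) (z : 'rV[R]_n) := @pos0 R (1 - z ord0 (enum_rank y) / del).
pose g (z : 'rV[R]_n) : 'rV[R]_m :=
  \row_(j < m) \sum_(y : V) (if f y == enum_val j then phi y z else 0).
pose C : R := (m * n)%:R / del.
have C0 : 0 <= C by rewrite divr_ge0 // ltW.
pose omega (t : R) := C * t.
have hmod : cont_modulus omega g.
  split.
  - by rewrite /omega mulr0.
  - by move=> t t0; rewrite /omega mulr_ge0.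
  - exact: omega_cont.
  move=> z z'; apply: le_trans (enorm_le_sum _ _ _) _.
  have H1 : forall j, `|(g z - g z') ord0 j| <= n%:R * (enorm (z - z') / del).
    move=> j; rewrite !mxE -sumrB.
    apply: le_trans (ler_norm_sum _ _ _) _.
    have -> : n%:R * (enorm (z - z') / del) = \sum_(y : V) (enorm (z - z') / del).
      by rewrite sumr_const mulr_natl.
    apply: ler_sum => y _.
    have hy : `|phi y z - phi y z'| <= enorm (z - z') / del.
      apply: le_trans (pos0_lip _ _ _) _.
      have -> : (1 - z ord0 (enum_rank y) / del) - (1 - z' ord0 (enum_rank y) / del)
          = - ((z - z') ord0 (enum_rank y)) / del.
        by rewrite !mxE; field; rewrite gt_eqF.
      have hd' : 0 <= del^-1 by rewrite invr_ge0 ltW.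
      rewrite normrM normrN (ger0_norm hd').
      by rewrite ler_wpM2r // (coord_le _ _ (z - z')).
    case: ifP => _; first exact: hy.
    by rewrite subr0 normr0 divr_ge0 // ?sqrtr_ge0 // ltW.
  apply: le_trans (ler_sum _ (fun j _ => H1 j)) _.
  rewrite sumr_const card_ord /omega /C -mulr_natl natrM.
  by rewrite le_eqVlt; apply/orP; left; apply/eqP; field; rewrite gt_eqF.
pose K := [set rowx x | x in [set: V]].
have hK := range_compact _ _ _ rowx.
pose M := \sum_(x : V) \sum_(u : V') graph_dist e' W' u (f x).
have M0 : 0 <= M by do 2 (apply: sumr_ge0 => ? _); exact: (dist_ge0 _ _ _ _ hG' hc').
pose eta := eps / (2 * (M + 1)).
have eta0 : 0 < eta by rewrite divr_gt0 // mulr_gt0 //; lra.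
have [_ hr] := (hF.2.1 n m omega K).
have /cvgrPdist_lt /(_ eta eta0) [N _ HN] := hr.
have hcN : (0 < N.+1)%N by [].
have [ghat hghat herr] := hF.2.2 n m g omega K N.+1 hmod hK hcN.
exists N.+1; split => //; exists ghat => // x.
have hrow : enorm (g (rowx x) - ghat (rowx x)) < eta.
  apply: le_lt_trans (herr _ _) _; first by exists x.
  have := HN N.+1 (leqnSn N); rewrite /= sub0r normrN => h.
  exact: le_lt_trans (ler_norm _) h.
pose e0 : 'rV[R]_m := \row_j (if enum_val j == f x then 1 else 0).
have hge0 : g (rowx x) = e0.
  apply/rowP => j; rewrite !mxE (bigD1 x) //= big1 => [|y hy].
    rewrite /phi mxE enum_rankK (dist_refl _ _ _ _ hG hc) mul0r subr0 /pos0 ler01 addr0.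
    by rewrite eq_sym.
  case: ifP => // _; rewrite /phi mxE enum_rankK pos0_le0 //.
  have h1 := hsep x y (negbT (introF eqP (fun h => negP hy (introT eqP (esym h))))).
  have : 1 <= graph_dist e W x y / del by rewrite ler_pdivlMr // mul1r.
  lra.
rewrite hge0 in hrow.
have he0 : simplex e0.
  split; first by move=> i; rewrite mxE; case: ifP.
  rewrite (bigD1 (enum_rank (f x))) //= mxE enum_rankK eqxx big1 ?addr0 // => j hj.
  rewrite mxE; case: ifP => // /eqP hj'; move: hj; rewrite -hj' enum_valK eqxx //.
set y := ghat (rowx x).
pose P := [set p | simplex p /\ forall q, simplex q -> enorm (p - y) <= enorm (q - y)].
have hThat : That e W ghat x = fun u => proj_simplex y ord0 (enum_rank u) by [].
rewrite hThat.
have -> : proj_simplex y = xget 0 P by [].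
case: (pselect (exists q, P q)) => [ex|nex]; last first.
  have p0 : xget 0 P = 0 := xgetPN 0 (fun q hq => nex (ex_intro _ q hq)).
  rewrite p0 /W1.
  have -> : [set c : R | exists pi, coupling (fun u => (0 : 'rV[R]_m) ord0 (enum_rank u)) (dirac_pt (f x)) pi /\
      c = \sum_u \sum_v pi u v * graph_dist e' W' u v] = set0.
    apply/seteqP; split => // c [pi [[hpi h1 h2] _]]; exfalso.
    have hh : \sum_u \sum_v pi u v = \sum_v \sum_u pi u v by exact: exchange_big.
    have l : \sum_u \sum_v pi u v = 0 by rewrite big1 // => u _; rewrite h1 mxE.
    have rr : \sum_v \sum_u pi u v = 1.
      by rewrite -(sum_dirac _ _ (f x)); apply: eq_bigr => v _; exact: h2.
    by move: hh; rewrite l rr => /eqP; rewrite eq_sym oner_eq0.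
  by rewrite inf0.
have [ps pmin] : P (xget 0 P) := xgetPex 0 ex.
set p := xget 0 P in ps pmin *.
have hmin := pmin e0 he0.
have hcoord : forall u, u != f x -> p ord0 (enum_rank u) <= 2 * eta.
  move=> u hu.
  have a := coord_le _ _ (p - y) (enum_rank u).
  have b := coord_le _ _ (e0 - y) (enum_rank u).
  rewrite !mxE enum_rankK (negbTE hu) sub0r normrN in b.
  rewrite !mxE in a.
  have a1 := le_trans (ler_norm _) a.
  have b1 := le_trans (ler_norm _) b.
  lra.
pose pi u v := p ord0 (enum_rank u) * dirac_pt (f x) v.
have sump : \sum_u p ord0 (enum_rank u) = 1.
  rewrite -ps.2 (reindex (@enum_rank V')) //=.
  exact: onW_bij (enum_rank_bij V').
have hcoup : coupling (fun u => p ord0 (enum_rank u)) (dirac_pt (f x)) pi.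
  split.
  - by move=> u v; apply: mulr_ge0; [exact: ps.1| exact: dirac_ge0].
  - by move=> u; rewrite /pi -mulr_sumr (sum_dirac _ _ (f x)) mulr1.
  - by move=> v; rewrite /pi -mulr_suml sump mul1r.
have hW : W1 (graph_dist e' W') (fun u => p ord0 (enum_rank u)) (dirac_pt (f x))
    <= \sum_u \sum_v pi u v * graph_dist e' W' u v.
  apply: ge_inf; last by exists pi.
  exists 0 => c [pi' [[h0 _ _] ->]].
  apply: sumr_ge0 => u _; apply: sumr_ge0 => v _.
  by apply: mulr_ge0 (h0 u v) (dist_ge0 _ _ _ _ hG' hc' u v).
apply: le_lt_trans hW _.
have hS : \sum_u \sum_v pi u v * graph_dist e' W' u v
    <= \sum_u (2 * eta) * graph_dist e' W' u (f x).
  apply: ler_sum => u _.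
  rewrite (bigD1 (f x)) //= big1 => [|v hv]; last by rewrite /pi /dirac_pt (negbTE hv) mulr0 mul0r.
  rewrite addr0 /pi /dirac_pt eqxx mulr1.
  case: (eqVneq u (f x)) => [->|hu]; first by rewrite (dist_refl _ _ _ _ hG' hc') !mulr0.
  by rewrite ler_wpM2r // ?(dist_ge0 _ _ _ _ hG' hc') ?hcoord.
apply: le_lt_trans hS _.
rewrite -mulr_sumr.
have hSM : \sum_u graph_dist e' W' u (f x) <= M.
  rewrite /M (bigD1 x) //= lerDl; apply: sumr_ge0 => x' _; apply: sumr_ge0 => u _.
  exact: (dist_ge0 _ _ _ _ hG' hc').
have h2 : 2 * eta * \sum_u graph_dist e' W' u (f x) <= 2 * eta * M.
  by rewrite ler_wpM2l // mulr_ge0 // ltW.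
have heq : 2 * eta * M = eps - 2 * eta.
  rewrite /eta; field; apply/eqP; lra.
lra.
Qed.
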